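(* Let $(I,\le)$ be a totally ordered set with smallest element $0$, and let $\{G_i,\pi_{ij}\}$ be a direct system of finitely generated groups indexed by $I$ with surjective homomorphisms $\pi_{ij}:G_i\to G_j$ for all $j\ge i$ (with $\pi_{ii}=\mathrm{id}$ and $\pi_{jk}\circ\pi_{ij}=\pi_{ik}$), and let $G_\infty=\varinjlim G_i$. Then for each prime $p$, $\limsup_{i\in I} RG_p(G_i)\le RG_p(G_\infty)$.
   Context: For a group $A$, $d(A)$ is the minimal number of generators and $d_p(A)=d\big(A/[A,A]A^p\big)$. For a finitely generated group $G$, $RG_p(G)=\inf_H\frac{d_p(H)-1}{[G:H]}$, the infimum over normal subgroups $H\trianglelefteq G$ of $p$-power index. The $\limsup$ is taken along the total order of $I$. *)

(* Defs.v *)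
From mathcomp Require Import all_boot all_order all_algebra.
From mathcomp Require Import all_classical all_reals ereal.
From Stdlib Require List.
Set Implicit Arguments. Unset Strict Implicit. Unset Printing Implicit Defensive.
Import Order.TTheory GRing.Theory Num.Theory.

Record grp := Grp {
  gcar :> Type;
  gmul : gcar -> gcar -> gcar;
  gone : gcar;
  ginv : gcar -> gcar;
  gmulA : forall x y z, gmul x (gmul y z) = gmul (gmul x y) z;
  gmul1l : forall x, gmul gone x = x;
  gmulVl : forall x, gmul (ginv x) x = gone }.

Section GroupNotions.
Variable G : grp.
Local Notation "x * y" := (gmul x y).

Definition gexp (x : G) (n : nat) : G := iter n (gmul x) (gone G).
Definition gcomm (x y : G) : G := ginv x * (ginv y * (x * y)).

Definition is_subgroup (H : G -> Prop) : Prop :=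
  H (gone G) /\ (forall x y, H x -> H y -> H (x * y)) /\ (forall x, H x -> H (ginv x)).

Definition is_normal (H : G -> Prop) : Prop :=
  is_subgroup H /\ (forall x g, H x -> H (ginv g * (x * g))).

Definition gen (S : G -> Prop) : G -> Prop :=
  fun x => forall K, is_subgroup K -> (forall s, S s -> K s) -> K x.

Definition fin_generated : Prop :=
  exists s : seq G, forall x, gen (fun y => List.In y s) x.

(* H has index n in G: there are exactly n left cosets of H *)
Definition index_is (H : G -> Prop) (n : nat) : Prop :=
  exists f : 'I_n -> G,
    (forall g, exists i, H (ginv (f i) * g)) /\
    (forall i j, H (ginv (f i) * f j) -> i = j).

Definition commpow (p : nat) (H : G -> Prop) : G -> Prop :=
  gen (fun z => (exists x y, H x /\ H y /\ z = gcomm x y) \/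
                (exists x, H x /\ z = gexp x p)).

(* d(H/[H,H]H^p) <= k : the quotient H/[H,H]H^p is generated by (the images
   of) k elements of H, i.e. H is generated by k elements together with
   [H,H]H^p. *)
Definition dp_le (p : nat) (H : G -> Prop) (k : nat) : Prop :=
  exists s : seq G, size s = k /\ (forall x, List.In x s -> H x) /\
    (forall x, H x -> gen (fun y => List.In y s \/ commpow p H y) x).

Local Open Scope ereal_scope.

(* d_p(H) as an extended real (the minimum of the k above; +oo if none) *)
Definition dp {R : realType} (p : nat) (H : G -> Prop) : \bar R :=
  ereal_inf [set (k%:R)%:E | k in [set k : nat | dp_le p H k]].

Definition RG {R : realType} (p : nat) : \bar R :=
  ereal_inf [set x | exists (H : G -> Prop) (k : nat),
     is_normal H /\ index_is H (p ^ k) /\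
     x = (dp p H - 1) * ((((p ^ k)%:R : R)^-1)%:E)].

End GroupNotions.

Definition is_hom (G K : grp) (f : G -> K) : Prop :=
  forall x y, f (gmul x y) = gmul (f x) (f y).

Definition surj_direct_system {d} {I : porderType d} (G : I -> grp)
    (pi : forall i j, G i -> G j) : Prop :=
  (forall i j, (i <= j)%O -> is_hom (pi i j)) /\
  (forall i j, (i <= j)%O -> forall y : G j, exists x, pi i j x = y) /\
  (forall i (x : G i), pi i i x = x) /\
  (forall i j k, (i <= j)%O -> (j <= k)%O -> forall x, pi j k (pi i j x) = pi i k x).

Definition is_direct_limit {d} {I : porderType d} (G : I -> grp)
    (pi : forall i j, G i -> G j) (Ginf : grp) (iota : forall i, G i -> Ginf) : Prop :=
  (forall i, is_hom (iota i)) /\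
  (forall i j, (i <= j)%O -> forall x, iota j (pi i j x) = iota i x) /\
  (forall (K : grp) (f : forall i, G i -> K),
     (forall i, is_hom (f i)) ->
     (forall i j, (i <= j)%O -> forall x, f j (pi i j x) = f i x) ->
     exists u : Ginf -> K, is_hom u /\ (forall i x, u (iota i x) = f i x) /\
       (forall v : Ginf -> K, is_hom v -> (forall i x, v (iota i x) = f i x) ->
          forall y, v y = u y)).

Definition limsup_I {R : realType} {d} {I : porderType d} (a : I -> \bar R) : \bar R :=
  ereal_inf [set ereal_sup [set a j | j in [set j | (i <= j)%O]] | i in [set: I]].

(* Main.v *)
Require Import Defs.
From mathcomp Require Import all_boot all_order all_algebra.
From mathcomp Require Import all_classical all_reals ereal.
From Stdlib Require List.
Set Implicit Arguments. Unset Strict Implicit. Unset Printing Implicit Defensive.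
Import Order.TTheory.

Local Notation "x ⋆ y" := (gmul x y) (at level 40, left associativity).



Section GL.
Variable G : grp.
Implicit Types x y z : G.

Lemma gmulVr x : x ⋆ ginv x = gone G.
Proof.
have h : ginv (ginv x) ⋆ ginv x = gone G by rewrite gmulVl.
rewrite -[x ⋆ _]gmul1l -{1}h -!gmulA (gmulA (ginv x)) gmulVl gmul1l gmulVl //.
Qed.
Lemma gmul1r x : x ⋆ gone G = x.
Proof. by rewrite -(gmulVl x) gmulA gmulVr gmul1l. Qed.
Lemma gmulKV x y : ginv x ⋆ (x ⋆ y) = y.
Proof. by rewrite gmulA gmulVl gmul1l. Qed.
Lemma gmulVK x y : x ⋆ (ginv x ⋆ y) = y.
Proof. by rewrite gmulA gmulVr gmul1l. Qed.
Lemma gmulIl x y z : x ⋆ y = x ⋆ z -> y = z.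
Proof. by move=> h; rewrite -(gmulKV x y) h gmulKV. Qed.
Lemma ginv_uniq x y : x ⋆ y = gone G -> y = ginv x.
Proof. by move=> h; apply: (@gmulIl x); rewrite h gmulVr. Qed.
Lemma ginvK x : ginv (ginv x) = x.
Proof. by symmetry; apply: ginv_uniq; rewrite gmulVl. Qed.
Lemma ginvM x y : ginv (x ⋆ y) = ginv y ⋆ ginv x.
Proof. by symmetry; apply: ginv_uniq; rewrite -gmulA gmulVK gmulVr. Qed.
Lemma ginv1 : ginv (gone G) = gone G.
Proof. by symmetry; apply: ginv_uniq; rewrite gmul1r. Qed.

Lemma gen_in (S : G -> Prop) x : S x -> gen S x.
Proof. by move=> h K _ hS; apply: hS. Qed.
Lemma gen_min (S K : G -> Prop) : is_subgroup K -> (forall s, S s -> K s) -> forall x, gen S x -> K x.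
Proof. by move=> hK hS x hx; apply: hx. Qed.

Lemma sg1 (K : G -> Prop) : is_subgroup K -> K (gone G). Proof. by case. Qed.
Lemma sgM (K : G -> Prop) x y : is_subgroup K -> K x -> K y -> K (x ⋆ y). Proof. by case=> _ [h _]; apply: h. Qed.
Lemma sgV (K : G -> Prop) x : is_subgroup K -> K x -> K (ginv x). Proof. by case=> _ [_ h]; apply: h. Qed.
Lemma sgVV (K : G -> Prop) x : is_subgroup K -> K (ginv x) -> K x.
Proof. by move=> hK h; rewrite -(ginvK x); apply: sgV. Qed.
Lemma sgexp (K : G -> Prop) x n : is_subgroup K -> K x -> K (gexp x n).
Proof. by move=> hK hx; elim: n => [|n IH] /=; [apply: sg1| apply: (sgM hK)]. Qed.
Lemma sgcomm (K : G -> Prop) x y : is_subgroup K -> K x -> K y -> K (gcomm x y).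
Proof. by move=> hK hx hy; rewrite /gcomm; apply: (sgM hK); [apply: (sgV hK)|apply: (sgM hK);[apply: (sgV hK)|apply: (sgM hK)]]. Qed.
Lemma gen_subgroup (S : G -> Prop) : is_subgroup (gen S).
Proof.
split; first by move=> K [].
split; first by move=> x y hx hy K hK hS; apply: sgM => //; [apply: hx|apply: hy].
by move=> x hx K hK hS; apply: sgV => //; apply: hx.
Qed.
End GL.

Section Hom.
Variables (G K : grp) (f : G -> K).
Hypothesis hf : is_hom f.
Lemma hom1 : f (gone G) = gone K.
Proof. by apply: (@gmulIl _ (f (gone G))); rewrite -hf !gmul1r. Qed.
Lemma homV x : f (ginv x) = ginv (f x).
Proof. by apply: ginv_uniq; rewrite -hf gmulVr hom1. Qed.
Lemma homexp x n : f (gexp x n) = gexp (f x) n.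
Proof. by elim: n => [|n IH] /=; [apply: hom1 | rewrite hf IH]. Qed.
Lemma homcomm x y : f (gcomm x y) = gcomm (f x) (f y).
Proof. by rewrite /gcomm !hf !homV. Qed.
Lemma preim_sub (T : K -> Prop) : is_subgroup T -> is_subgroup (fun x => T (f x)).
Proof.
move=> hT; split; first by rewrite hom1; apply: sg1.
split; first by move=> x y hx hy; rewrite hf; apply: sgM.
by move=> x hx; rewrite homV; apply: sgV.
Qed.
Lemma preim_normal (T : K -> Prop) : is_normal T -> is_normal (fun x => T (f x)).
Proof.
case=> hT hn; split; first exact: preim_sub.
by move=> x g hx; rewrite !hf homV; apply: hn.
Qed.
Lemma gen_image (S : G -> Prop) (T : K -> Prop) : is_subgroup T ->
  (forall s, S s -> T (f s)) -> forall x, gen S x -> T (f x).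
Proof. by move=> hT hS; apply: gen_min => //; apply: preim_sub. Qed.
Lemma image_sub (S : G -> Prop) : is_subgroup S -> is_subgroup (fun y => exists x, S x /\ f x = y).
Proof.
move=> hS; split; first by exists (gone G); split; [apply: sg1|apply: hom1].
split; first by move=> _ _ [x [hx <-]] [y [hy <-]]; exists (x ⋆ y); split; [apply: sgM|apply: hf].
by move=> _ [x [hx <-]]; exists (ginv x); split; [apply: sgV|apply: homV].
Qed.
End Hom.



Lemma sig_eq (T : Type) (P : T -> Prop) (x y : {s | P s}) : proj1_sig x = proj1_sig y -> x = y.
Proof. case: x => a ha; case: y => b hb /= e; subst b; congr exist; exact: Prop_irrelevance. Qed.

Section Quot.
Variables (A : grp) (N : A -> Prop).
Hypothesis HN : is_normal N.
Let HS : is_subgroup N. Proof. by case: HN. Qed.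

Definition qcos (a : A) : A -> Prop := fun b => N (ginv a ⋆ b).
Definition qT := {S : A -> Prop | exists a, S = qcos a}.
Definition qc (a : A) : qT := exist _ (qcos a) (ex_intro _ a erefl).
Definition qrep (z : qT) : A := proj1_sig (cid (proj2_sig z)).

Lemma qc_rep z : qc (qrep z) = z.
Proof.
apply: sig_eq; rewrite /qrep; case: z => S hS /=; case: (cid hS) => a ha /=.
by rewrite ha.
Qed.

Lemma qc_eq a b : qc a = qc b <-> N (ginv a ⋆ b).
Proof.
split.
  move=> h; have : qcos a = qcos b by move: h => /(congr1 (@proj1_sig _ _)).
  move=> /(congr1 (fun S => S b)); rewrite /qcos gmulVl => ->; exact: sg1.
move=> h; rewrite /qc.
have e : qcos a = qcos b.
  apply: funext => c; apply: propext; rewrite /qcos; split => hc.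
    have -> : ginv b ⋆ c = ginv (ginv a ⋆ b) ⋆ (ginv a ⋆ c) by rewrite ginvM ginvK -gmulA gmulVK.
    by apply: (sgM HS) => //; apply: (sgV HS).
  have -> : ginv a ⋆ c = (ginv a ⋆ b) ⋆ (ginv b ⋆ c) by rewrite -gmulA gmulVK.
  by apply: (sgM HS).
by apply: sig_eq.
Qed.

Definition qmul (z w : qT) : qT := qc (qrep z ⋆ qrep w).
Definition qinv (z : qT) : qT := qc (ginv (qrep z)).
Definition qone : qT := qc (gone A).

Lemma qc_mul a b : qmul (qc a) (qc b) = qc (a ⋆ b).
Proof.
rewrite /qmul; apply/qc_eq.
set ra := qrep (qc a); set rb := qrep (qc b).
have ha : N (ginv ra ⋆ a) by apply/qc_eq; rewrite qc_rep.
have hb : N (ginv rb ⋆ b) by apply/qc_eq; rewrite qc_rep.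
have -> : ginv (ra ⋆ rb) ⋆ (a ⋆ b) = (ginv rb ⋆ ((ginv ra ⋆ a) ⋆ rb)) ⋆ (ginv rb ⋆ b).
  by rewrite ginvM -!gmulA gmulVK.
apply: sgM => //; case: HN => _; apply; exact: ha.
Qed.
Lemma qc_inv a : qinv (qc a) = qc (ginv a).
Proof.
rewrite /qinv; apply/qc_eq; set ra := qrep (qc a).
have ha : N (ginv ra ⋆ a) by apply/qc_eq; rewrite qc_rep.
rewrite ginvK.
have -> : ra ⋆ ginv a = ra ⋆ (ginv (ginv ra ⋆ a) ⋆ ginv ra) by rewrite ginvM ginvK -gmulA gmulVr gmul1r.
have hn := proj2 HN (ginv (ginv ra ⋆ a)) (ginv ra) (sgV HS ha); rewrite ginvK in hn; exact: hn.
Qed.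
Lemma qc_surj z : exists a, z = qc a.
Proof. by exists (qrep z); rewrite qc_rep. Qed.

Lemma qmulA x y z : qmul x (qmul y z) = qmul (qmul x y) z.
Proof.
case: (qc_surj x) => a ->; case: (qc_surj y) => b ->; case: (qc_surj z) => c ->.
by rewrite !qc_mul gmulA.
Qed.
Lemma qmul1l x : qmul qone x = x.
Proof. by case: (qc_surj x) => a ->; rewrite /qone qc_mul gmul1l. Qed.
Lemma qmulVl x : qmul (qinv x) x = qone.
Proof. by case: (qc_surj x) => a ->; rewrite qc_inv qc_mul gmulVl. Qed.

Definition Qgrp : grp := Grp qmulA qmul1l qmulVl.
Lemma qc_hom : is_hom (qc : A -> Qgrp).
Proof. by move=> x y; rewrite /= qc_mul. Qed.
End Quot.



Unset Implicit Arguments.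
Section Lim.
Variables (d : Order.disp_t) (I : orderType d) (i0 : I).
Hypothesis Hi0 : forall i : I, (i0 <= i)%O.
Variables (G : I -> grp) (pi : forall i j : I, G i -> G j).
Hypothesis Hsys : surj_direct_system pi.
Variables (Ginf : grp) (iota : forall i, G i -> Ginf).
Hypothesis Hlim : is_direct_limit pi iota.
Set Implicit Arguments.

Lemma pi_hom i j : (i <= j)%O -> is_hom (pi i j).
Proof. by case: Hsys => h _; apply: h. Qed.
Lemma pi_comp i j k x : (i <= j)%O -> (j <= k)%O -> pi j k (pi i j x) = pi i k x.
Proof. by case: Hsys => _ [_ [_ h]] hij hjk; apply: h. Qed.
Lemma pi_id i x : pi i i x = x.
Proof. by case: Hsys => _ [_ [h _]]; apply: h. Qed.
Lemma pi_surj i j : (i <= j)%O -> forall y : G j, exists x, pi i j x = y.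
Proof. by case: Hsys => _ [h _]; apply: h. Qed.
Lemma iota_hom i : is_hom (iota i).
Proof. by case: Hlim => h _; apply: h. Qed.
Lemma iota_pi i j x : (i <= j)%O -> iota j (pi i j x) = iota i x.
Proof. by case: Hlim => _ [h _] hij; apply: h. Qed.

Arguments pi_hom {i j} _.
Arguments pi_comp {i j k} x _ _.
Arguments pi_surj {i j} _ y.
Arguments iota_pi {i j} x _.
Arguments iota_hom : clear implicits.

Definition Nk (a : G i0) : Prop := exists j, pi i0 j a = gone (G j).

Lemma Nk_up (a : G i0) j k : pi i0 j a = gone (G j) -> (j <= k)%O -> pi i0 k a = gone (G k).
Proof. by move=> h hjk; rewrite -(pi_comp a (Hi0 j) hjk) h (hom1 (pi_hom hjk)). Qed.

Lemma Nk_normal : is_normal Nk.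
Proof.
have H0 := fun j => pi_hom (Hi0 j).
split; [split; [|split]|].
- by exists i0; rewrite (hom1 (H0 i0)).
- move=> x y [j hj] [k hk]; case/orP: (le_total j k) => hjk.
    by exists k; rewrite (H0 k) hk (Nk_up hj hjk) gmul1l.
  by exists j; rewrite (H0 j) hj (Nk_up hk hjk) gmul1l.
- by move=> x [j hj]; exists j; rewrite (homV (H0 j)) hj ginv1.
- by move=> x g [j hj]; exists j; rewrite !(H0 j) (homV (H0 j)) hj gmul1l gmulVl.
Qed.

Definition Q := Qgrp Nk_normal.
Definition lift i (x : G i) : G i0 := proj1_sig (cid (pi_surj (Hi0 i) x)).
Lemma liftP i (x : G i) : pi i0 i (lift x) = x.
Proof. by rewrite /lift; case: cid. Qed.

Lemma same_q i (a b : G i0) : pi i0 i a = pi i0 i b -> qc Nk a = qc Nk b.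
Proof.
move=> h; apply/(qc_eq Nk_normal); exists i.
by rewrite (pi_hom (Hi0 i)) (homV (pi_hom (Hi0 i))) h gmulVl.
Qed.

Definition fq i (x : G i) : Q := qc Nk (lift x).
Lemma fq_hom i : is_hom (@fq i).
Proof.
move=> x y; rewrite /fq /= (qc_mul Nk_normal); apply: (same_q (i:=i)).
by rewrite (pi_hom (Hi0 i)) !liftP.
Qed.
Lemma fq_compat i j : (i <= j)%O -> forall x, fq (pi i j x) = fq x.
Proof.
move=> hij x; rewrite /fq; apply: (same_q (i:=j)).
by rewrite liftP -(pi_comp (lift x) (Hi0 i) hij) liftP.
Qed.

Lemma Nk_iota (a : G i0) : Nk a -> iota i0 a = gone Ginf.
Proof. by case=> j hj; rewrite -(iota_pi a (Hi0 j)) hj (hom1 (iota_hom j)). Qed.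
Lemma iota_eq (a b : G i0) : Nk (ginv a ⋆ b) -> iota i0 a = iota i0 b.
Proof.
move=> /Nk_iota; rewrite (iota_hom i0) (homV (iota_hom i0)) => h.
by rewrite -(gmulVK (iota i0 a) (iota i0 b)) h gmul1r.
Qed.

Lemma lim_facts : (forall a : G i0, iota i0 a = gone Ginf -> Nk a) /\
  (forall y : Ginf, exists a, iota i0 a = y).
Proof.
case: Hlim => _ [_ U].
case: (U Q fq fq_hom fq_compat) => u [hu [hui _]].
have u0 : forall a, u (iota i0 a) = qc Nk a.
  by move=> a; rewrite hui /fq; apply: (same_q (i:=i0)); rewrite liftP pi_id.
split.
  move=> a h; have := u0 a; rewrite h (hom1 hu) => /esym /(qc_eq Nk_normal).
  by rewrite gmul1r => /(sgVV (proj1 Nk_normal)).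
pose g (z : Q) := iota i0 (qrep z).
have grep : forall a, g (qc Nk a) = iota i0 a.
  by move=> a; apply: iota_eq; apply/(qc_eq Nk_normal); rewrite qc_rep.
have ghom : is_hom g.
  move=> z w; case: (qc_surj z) => a ->; case: (qc_surj w) => b ->.
  by rewrite /= (qc_mul Nk_normal) !grep (iota_hom i0).
case: (U Ginf iota iota_hom (fun i j h x => iota_pi x h)) => u0' [_ [_ uniq]].
have e1 := uniq id (fun x y => erefl) (fun i x => erefl).
have e2 : forall y, g (u y) = u0' y.
  apply: uniq; first by move=> x y; rewrite hu ghom.
  by move=> i x; rewrite hui /fq grep -(iota_pi _ (Hi0 i)) liftP.
by move=> y; exists (qrep (u y)); rewrite [RHS](e1 y) -e2.
Qed.
End Lim.



Lemma In_mem (T : eqType) (s : seq T) x : x \in s -> List.In x s.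
Proof. elim: s => [|y s IH] //=; rewrite in_cons => /orP [/eqP ->|h]; [by left|right; exact: IH]. Qed.

Section Ev.
Variables (d : Order.disp_t) (I : orderType d) (i0 : I).
Definition Ev (Q : I -> Prop) := exists i, forall j, (i <= j)%O -> Q j.
Lemma Ev_and Q1 Q2 : Ev Q1 -> Ev Q2 -> Ev (fun j => Q1 j /\ Q2 j).
Proof.
move=> [a ha] [b hb]; case/orP: (le_total a b) => hab.
  by exists b => j hj; split; [apply: ha; apply: le_trans hj | apply: hb].
by exists a => j hj; split; [apply: ha | apply: hb; apply: le_trans hj].
Qed.
Lemma Ev_seq (T : Type) (s : seq T) (Q : T -> I -> Prop) :
  (forall x, List.In x s -> Ev (Q x)) -> Ev (fun j => forall x, List.In x s -> Q x j).
Proof.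
elim: s => [|y s IH] h; first by exists i0 => j _ x [].
have := Ev_and (h y (or_introl erefl)) (IH (fun x hx => h x (or_intror hx))).
by case=> i hi; exists i => j hj x [<-|hx]; have [h1 h2] := hi j hj; [exact: h1|exact: h2].
Qed.
Lemma Ev_ord n (Q : 'I_n -> I -> Prop) : (forall k, Ev (Q k)) -> Ev (fun j => forall k, Q k j).
Proof.
move=> h; have [i hi] := Ev_seq (s := enum 'I_n) (fun k _ => h k).
by exists i => j hj k; apply: hi => //; apply: In_mem; rewrite mem_enum.
Qed.
End Ev.

Unset Implicit Arguments.
Section Main.
Variables (d : Order.disp_t) (I : orderType d) (i0 : I).
Hypothesis Hi0 : forall i : I, (i0 <= i)%O.
Variables (G : I -> grp) (pi : forall i j : I, G i -> G j).
Hypothesis Hsys : surj_direct_system pi.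
Variables (Ginf : grp) (iota : forall i, G i -> Ginf).
Hypothesis Hlim : is_direct_limit pi iota.
Hypothesis Gfg : fin_generated (G i0).
Variables (p : nat) (H : Ginf -> Prop) (n m : nat).
Hypothesis HHn : is_normal H.
Hypothesis HHi : index_is H n.
Hypothesis HHd : dp_le p H m.
Set Implicit Arguments.

Unset Implicit Arguments.
Let A := G i0.
Let phi := iota i0.
Let ihom (i : I) : is_hom (iota i) := @iota_hom _ _ _ _ _ _ Hlim i.
Let ipi {i j} (x : G i) (h : (i <= j)%O) : iota j (pi i j x) = iota i x := iota_pi Hlim x h.
Let phom : is_hom phi := ihom i0.
Let pihom {i j} (h : (i <= j)%O) : is_hom (pi i j) := pi_hom Hsys h.
Let HHs : is_subgroup H := proj1 HHn.
Let Hsurj : forall y, exists a, phi a = y := proj2 (lim_facts Hi0 Hsys Hlim).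
Let Hker : forall a, phi a = gone Ginf -> @Nk _ _ i0 _ pi a := proj1 (lim_facts Hi0 Hsys Hlim).

Set Implicit Arguments.
Definition lf (y : Ginf) : A := proj1_sig (cid (Hsurj y)).
Lemma lfP y : phi (lf y) = y. Proof. by rewrite /lf; case: cid. Qed.
Lemma lfP' y : iota i0 (lf y) = y. Proof. exact: lfP. Qed.

Definition L (a : A) := H (phi a).
Lemma L_sub : is_subgroup L. Proof. exact: preim_sub phom _ HHs. Qed.

Definition sH : seq Ginf := proj1_sig (cid HHd).
Lemma sHP : size sH = m /\ (forall x, List.In x sH -> H x) /\
    (forall x, H x -> gen (fun y => List.In y sH \/ commpow p H y) x).
Proof. by rewrite /sH; case: cid. Qed.

Definition s' := map lf sH.
Definition M (j : I) := gen (fun y : A => List.In y s' \/ commpow p L y \/ pi i0 j y = gone (G j)).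
Definition M' := gen (fun y : A => List.In y s' \/ commpow p L y).

Lemma commpow_sub (K : A -> Prop) : is_subgroup K -> forall x, commpow p K x -> K x.
Proof.
move=> hK; apply: gen_min => // z [[x [y [hx [hy ->]]]]|[x [hx ->]]].
  exact: sgcomm.
exact: sgexp.
Qed.

Lemma M_L j a : M j a -> L a.
Proof.
apply: gen_min; first exact: L_sub.
move=> y [hy|[hy|hy]].
- move: hy; rewrite /s' => /List.in_map_iff [z [<- hz]].
  by rewrite /L lfP; apply: (proj1 (proj2 sHP)).
- exact: commpow_sub L_sub _ hy.
- by rewrite /L /phi -(ipi y (Hi0 j)) hy (hom1 (ihom j)); apply: sg1.
Qed.

Lemma M'_M j a : M' a -> M j a.
Proof.
apply: gen_min; first exact: gen_subgroup.
by move=> y [hy|hy]; apply: gen_in; [left|right; left].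
Qed.

Lemma H_img y : H y -> exists b, M' b /\ phi b = y.
Proof.
have hIm := image_sub phom (gen_subgroup (fun y : A => List.In y s' \/ commpow p L y)).
move=> /(proj2 (proj2 sHP)); apply: (gen_min hIm) => // z [hz|hz].
  exists (lf z); split; last exact: lfP.
  by apply: gen_in; left; apply: List.in_map.
move: z hz; apply: (gen_min hIm) => // z [[x [x2 [hx [hy ->]]]]|[x [hx ->]]].
  exists (gcomm (lf x) (lf x2)); split; last by rewrite (homcomm phom) !lfP.
  apply: gen_in; right; apply: gen_in; left; exists (lf x), (lf x2).
  by rewrite /L !lfP.
exists (gexp (lf x) p); split; last by rewrite (homexp phom) !lfP.
apply: gen_in; right; apply: gen_in; right; exists (lf x).
by rewrite /L !lfP.
Qed.

Lemma L_ev a : L a -> Ev (fun j => M j a).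
Proof.
move=> /H_img [b [hb he]].
have : phi (ginv b ⋆ a) = gone Ginf by rewrite phom (homV phom) he gmulVl.
move=> /Hker [j0 hj0]; exists j0 => j hj.
rewrite -(gmulVK b a); apply: (sgM (gen_subgroup _)).
  exact: M'_M.
by apply: gen_in; right; right; apply: (Nk_up Hi0 Hsys hj0 hj).
Qed.

Definition hrep : 'I_n -> Ginf := proj1_sig (cid HHi).
Lemma hrepP : (forall g, exists k, H (ginv (hrep k) ⋆ g)) /\
   (forall k k', H (ginv (hrep k) ⋆ hrep k') -> k = k').
Proof. by rewrite /hrep; case: cid. Qed.
Definition c (k : 'I_n) : A := lf (hrep k).

Lemma c_coset g : exists k, L (ginv (c k) ⋆ g).
Proof.
have [k hk] := proj1 hrepP (phi g); exists k.
by rewrite /L phom (homV phom) /c lfP.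
Qed.

Definition sA : seq A := proj1_sig (cid Gfg).
Lemma sAP x : gen (fun y => List.In y sA) x.
Proof. by rewrite /sA; case: cid => s hs; apply: hs. Qed.

Definition Pone j (g : A) := forall k, exists k', M j (ginv (c k') ⋆ (g ⋆ c k)).
Definition P j (g : A) := Pone j g /\ Pone j (ginv g).

Lemma Pone_mul j g h : Pone j g -> Pone j h -> Pone j (g ⋆ h).
Proof.
move=> hg hh k; have [k1 h1] := hh k; have [k2 h2] := hg k1.
exists k2.
have -> : ginv (c k2) ⋆ (g ⋆ h ⋆ c k) = (ginv (c k2) ⋆ (g ⋆ c k1)) ⋆ (ginv (c k1) ⋆ (h ⋆ c k)).
  by rewrite -!gmulA gmulVK.
exact: (sgM (gen_subgroup _)).
Qed.

Lemma P_sub j : is_subgroup (P j).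
Proof.
have h1 : Pone j (gone A).
  by move=> k; exists k; rewrite gmul1l gmulVl; apply: sg1 (gen_subgroup _).
split; first by split => //; rewrite ginv1.
split.
  move=> x y [hx1 hx2] [hy1 hy2]; split; first exact: Pone_mul.
  by rewrite ginvM; apply: Pone_mul.
by move=> x [h2 h3]; split => //; rewrite ginvK.
Qed.

Lemma Ev_mono (Q Q' : I -> Prop) : Ev Q -> (forall j, Q j -> Q' j) -> Ev Q'.
Proof. by move=> [i hi] h; exists i => j hj; apply: h; apply: hi. Qed.

Lemma Pone_ev g : Ev (fun j => Pone j g).
Proof.
apply: (Ev_ord i0) => k; have [k' hk'] := c_coset (g ⋆ c k).
by apply: (Ev_mono (L_ev hk')) => j hj; exists k'.
Qed.

Lemma R_ev : Ev (fun j => (forall t, List.In t sA -> P j t) /\ (forall k, L (c k) -> M j (c k))).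
Proof.
apply: Ev_and.
  apply: (Ev_seq i0) => //= t _; exact: Ev_and (Pone_ev t) (Pone_ev (ginv t)).
apply: (Ev_ord i0) => k; case: (pselect (L (c k))) => h.
  by apply: (Ev_mono (L_ev h)) => j hj _.
by exists i0 => j _ /h.
Qed.

Lemma schreier : Ev (fun j => forall g, L g -> M j g).
Proof.
apply: (Ev_mono R_ev) => j [hgen hc] g hg.
have hP : P j g by apply: (gen_min (P_sub j) hgen); apply: sAP.
have [k0 hk0] := c_coset (gone A).
have Lc0 : L (c k0) by apply: (sgVV L_sub); rewrite -(gmul1r (ginv (c k0))).
have [k1 hk1] := proj1 hP k0.
have Lc1 : L (c k1).
  apply: (sgVV L_sub).
  have -> : ginv (c k1) = (ginv (c k1) ⋆ (g ⋆ c k0)) ⋆ (ginv (c k0) ⋆ ginv g).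
    by rewrite -!gmulA gmulVK gmulVr gmul1r.
  apply: (sgM L_sub); first exact: (M_L hk1).
  by apply: (sgM L_sub); [apply: (sgV L_sub) | apply: (sgV L_sub)].
have -> : g = c k1 ⋆ (ginv (c k1) ⋆ (g ⋆ c k0)) ⋆ ginv (c k0).
  by rewrite gmulVK -gmulA gmulVr gmul1r.
apply: (sgM (gen_subgroup _)); last by apply: (sgV (gen_subgroup _)); apply: hc.
by apply: (sgM (gen_subgroup _)) => //; apply: hc.
Qed.

Lemma Hj_normal j : is_normal (fun y : G j => H (iota j y)).
Proof. exact: preim_normal (ihom j) _ HHn. Qed.

Lemma Hj_index j : index_is (fun y : G j => H (iota j y)) n.
Proof.
exists (fun k => pi i0 j (c k)).
have e : forall k, iota j (pi i0 j (c k)) = hrep k by move=> k; rewrite (ipi _ (Hi0 j)); exact: lfP.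
split.
  move=> g; have [k hk] := proj1 hrepP (iota j g); exists k.
  by rewrite (ihom j) (homV (ihom j)) e.
by move=> k k'; rewrite (ihom j) (homV (ihom j)) !e; apply: (proj2 hrepP).
Qed.

Lemma Hj_dp : Ev (fun j => dp_le p (fun y : G j => H (iota j y)) m).
Proof.
apply: (Ev_mono schreier) => j hj.
set Hj := fun y : G j => H (iota j y).
have pjhom := pihom (Hi0 j).
have Hjs : is_subgroup Hj := proj1 (Hj_normal j).
exists (map (pi i0 j) s'); split; first by rewrite size_map size_map (proj1 sHP).
split.
  move=> x /List.in_map_iff [y [<- /List.in_map_iff [z [<- hz]]]].
  by rewrite /Hj (ipi _ (Hi0 j)) lfP'; apply: (proj1 (proj2 sHP)).
move=> x hx; have [a ha] := pi_surj Hsys (Hi0 j) x.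
have La : L a by rewrite /L /phi -(ipi a (Hi0 j)) ha.
rewrite -ha; move: (hj a La); apply: (gen_image pjhom (gen_subgroup _)).
move=> y [hy|[hy|hy]].
- by apply: gen_in; left; apply: List.in_map.
- apply: gen_in; right.
  move: y hy; apply: (gen_image pjhom (gen_subgroup _)).
  move=> z [[x1 [x2 [h1 [h2 ->]]]]|[x1 [h1 ->]]].
    apply: gen_in; left; exists (pi i0 j x1), (pi i0 j x2); split; last split.
    + by rewrite /Hj (ipi _ (Hi0 j)).
    + by rewrite /Hj (ipi _ (Hi0 j)).
    exact: homcomm.
  apply: gen_in; right; exists (pi i0 j x1); split; last exact: homexp.
  by rewrite /Hj (ipi _ (Hi0 j)).
- by rewrite hy; apply: sg1 (gen_subgroup _).
Qed.

End Main.

Unset Implicit Arguments.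
Import Order.TTheory GRing.Theory Num.Theory.

Theorem lemma3p5 (R : realType) (d : Order.disp_t) (I : orderType d) (i0 : I)
    (Hi0 : forall i : I, (i0 <= i)%O)
    (G : I -> grp) (pi : forall i j : I, G i -> G j)
    (Gfg : forall i, fin_generated (G i))
    (Hsys : @surj_direct_system d I G pi)
    (Ginf : grp) (iota : forall i, G i -> Ginf)
    (Hlim : @is_direct_limit d I G pi Ginf iota)
    (p : nat) (hp : prime p) :
  (limsup_I (fun i => @RG (G i) R p) <= @RG Ginf R p)%E.
Proof.
rewrite {2}/RG; apply: le_ereal_inf_tmp => _ [Hh [k [hN [hI ->]]]].
have c0 : (0 <= (((p ^ k)%:R : R)^-1)%:E)%E by rewrite lee_fin invr_ge0 ler0n.
have cpos : (0 < (((p ^ k)%:R : R)^-1)%:E)%E.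
  by rewrite lte_fin invr_gt0 ltr0n expn_gt0 prime_gt0.
case: (pselect (exists m, dp_le p Hh m)) => [hex|hnex]; last first.
  have -> : @dp Ginf R p Hh = +oo%E.
    apply/ereal_inf_pinfty => y [m hm _]; exfalso; apply: hnex; exists m; exact: hm.
  by rewrite gt0_mulye ?leey.
pose P := fun m => `[< dp_le p Hh m >].
have hexP : exists m, P m by case: hex => m hm; exists m; apply/asboolP.
case: (ex_minnP hexP) => m /asboolP hm hmin.
have mle : ((m%:R : R)%:E <= @dp Ginf R p Hh)%E.
  apply: le_ereal_inf_tmp => _ [m' hm' <-]; rewrite lee_fin ler_nat; apply: hmin.
  exact/asboolP.
have [i hi] := Hj_dp Hi0 Hsys Hlim (Gfg i0) hN hI hm.
apply: (@le_trans _ _ (ereal_sup [set @RG (G j) R p | j in [set j | (i <= j)%O]])).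
  by apply: ereal_inf_lbound; exists i.
apply: ge_ereal_sup => _ [j hj <-].
apply: (@le_trans _ _ ((@dp (G j) R p (fun y => Hh (iota j y)) - 1) * (((p ^ k)%:R : R)^-1)%:E)%E).
  apply: ereal_inf_lbound; exists (fun y => Hh (iota j y)), k; split; last split => //.
    exact: (Hj_normal Hlim hN j).
  exact: (Hj_index Hi0 Hsys Hlim hI j).
apply: lee_wpmul2r => //; apply: leeB => //.
apply: (le_trans _ mle); apply: ereal_inf_lbound; exists m => //; exact: hi.
Qed.
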